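(* Let $I$ be an index set, $S,T\in GL(2,\mathbb R)$, and for $r\in I$ let $P_r=S\,\mathrm{diag}\{p_{1r},p_{2r}\}S^{-1}$, $Q_r=T\,\mathrm{diag}\{q_{1r},q_{2r}\}T^{-1}$ with all $p_{kr},q_{kr}$ nonzero reals. There exists a diffeomorphism (equivalently, a real-analytic diffeomorphism) $f\colon\overline{\mathbb R}\to\overline{\mathbb R}$ with $f(P_r(x))=Q_r(f(x))$ for all $x\in\overline{\mathbb R}$, $r\in I$, if and only if there exists $\varepsilon\in\{1,-1\}$ with $\dfrac{q_{1r}}{q_{2r}}=\Bigl(\dfrac{p_{1r}}{p_{2r}}\Bigr)^{\varepsilon}$ for all $r\in I$.
   Context: $\overline{\mathbb R}=\mathbb R\cup\{\infty\}$ with its standard smooth structure as the real projective line. A matrix $\begin{pmatrix}a&b\\c&d\end{pmatrix}\in GL(2,\mathbb R)$ acts on $\overline{\mathbb R}$ by $x\mapsto\frac{ax+b}{cx+d}$. *)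

(* Defs.v *)
From Stdlib Require Import Reals Lra.
Open Scope R_scope.

(** The real projective line  R ∪ {∞}:  [Some x] is the real x, [None] is ∞. *)
Definition P1 := option R.

Record mat2 := Mat2 { ma : R; mb : R; mc : R; md : R }.

Definition det2 (M : mat2) : R := ma M * md M - mb M * mc M.

Definition mmul (M N : mat2) : mat2 :=
  Mat2 (ma M * ma N + mb M * mc N) (ma M * mb N + mb M * md N)
       (mc M * ma N + md M * mc N) (mc M * mb N + md M * md N).

(** Inverse (meaningful when det2 M <> 0). *)
Definition minv (M : mat2) : mat2 :=
  Mat2 (md M / det2 M) (- mb M / det2 M) (- mc M / det2 M) (ma M / det2 M).

Definition diag2 (p q : R) : mat2 := Mat2 p 0 0 q.

Definition mob (M : mat2) (x : P1) : P1 :=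
  match x with
  | Some x => if Req_EM_T (mc M * x + md M) 0 then None
              else Some ((ma M * x + mb M) / (mc M * x + md M))
  | None => if Req_EM_T (mc M) 0 then None else Some (ma M / mc M)
  end.

(** Standard smooth atlas on R ∪ {∞}: chart 0 on R (x ↦ x),
    chart 1 on (R ∪ {∞}) \ {0}  (x ↦ 1/x, ∞ ↦ 0). *)
Definition in_dom (i : bool) (p : P1) : Prop :=
  if i then p <> Some 0 else p <> None.

Definition chart (i : bool) (p : P1) : R :=
  match p with
  | Some x => if i then / x else x
  | None => 0
  end.

Definition chart_inv (i : bool) (y : R) : P1 :=
  if i then (if Req_EM_T y 0 then None else Some (/ y)) else Some y.

Definition Cinf_on (g : R -> R) (x0 delta : R) : Prop :=
  exists gs : nat -> R -> R,
    (forall x, Rabs (x - x0) < delta -> gs O x = g x) /\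
    (forall n x, Rabs (x - x0) < delta -> derivable_pt_lim (gs n) x (gs (S n) x)).

Definition smooth_P1 (f : P1 -> P1) : Prop :=
  forall p : P1, exists i j : bool, in_dom i p /\
    exists delta, delta > 0 /\
      (forall y, Rabs (y - chart i p) < delta -> in_dom j (f (chart_inv i y))) /\
      Cinf_on (fun y => chart j (f (chart_inv i y))) (chart i p) delta.

Definition diffeo_P1 (f : P1 -> P1) : Prop :=
  exists g : P1 -> P1,
    (forall x, g (f x) = x) /\ (forall x, f (g x) = x) /\
    smooth_P1 f /\ smooth_P1 g.

(* Main.v *)
Require Import Defs.
From Stdlib Require Import Reals Lra ZArith FunctionalExtensionality Classical.
Open Scope R_scope.

Lemma chart_inv_chart i p : in_dom i p -> chart_inv i (chart i p) = p.
Proof.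
  destruct i, p as [x|]; simpl; intros H; auto.
  - destruct (Req_EM_T (/ x) 0) as [E|E].
    + exfalso; apply H. assert (x <> 0) by (intro; subst; auto).
      apply Rinv_neq_0_compat in H0. contradiction.
    + rewrite Rinv_inv; auto.
  - destruct (Req_EM_T 0 0); auto. lra.
  - contradiction.
Qed.

Lemma chart_chart_inv i y : chart i (chart_inv i y) = y.
Proof.
  destruct i; simpl; auto.
  destruct (Req_EM_T y 0); simpl; auto. rewrite Rinv_inv; auto.
Qed.

Lemma in_dom_chart_inv i y : in_dom i (chart_inv i y).
Proof.
  destruct i; simpl; [|discriminate].
  destruct (Req_EM_T y 0); [discriminate|].
  intro E; inversion E. apply Rinv_neq_0_compat in n; contradiction.
Qed.

Lemma dlim_loc (f g : R -> R) x l d : d > 0 ->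
  (forall y, Rabs (y - x) < d -> f y = g y) ->
  derivable_pt_lim f x l -> derivable_pt_lim g x l.
Proof.
  intros Hd Hfg Hf eps He. destruct (Hf eps He) as [del Hdel].
  assert (Hm : 0 < Rmin del d) by (apply Rmin_pos; [apply cond_pos|lra]).
  exists (mkposreal _ Hm). intros h Hh Hlt. simpl in Hlt.
  rewrite <- !Hfg.
  - apply Hdel; auto. apply Rlt_le_trans with (1 := Hlt); apply Rmin_l.
  - unfold Rminus; rewrite Rplus_opp_r, Rabs_R0; lra.
  - replace (x + h - x) with h by ring.
    apply Rlt_le_trans with (1 := Hlt); apply Rmin_r.
Qed.

Lemma dlim_affine a b x : derivable_pt_lim (fun y => a * y + b) x a.
Proof.
  intros eps He. exists (mkposreal 1 Rlt_0_1). intros h Hh _.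
  replace ((a * (x + h) + b - (a * x + b)) / h - a) with 0 by (field; auto).
  rewrite Rabs_R0; lra.
Qed.

Lemma dlim_cont f x l : derivable_pt_lim f x l ->
  forall e, e > 0 -> exists d, d > 0 /\ forall y, Rabs (y - x) < d -> Rabs (f y - f x) < e.
Proof.
  intros H e He.
  assert (Hc : continuity_pt f x).
  { apply derivable_continuous_pt. exists l; exact H. }
  unfold continuity_pt, continue_in, limit1_in, limit_in in Hc. simpl in Hc.
  destruct (Hc e He) as [a [Ha Hy]]. exists a; split; auto.
  intros y Hyx. destruct (Req_EM_T y x) as [E|E].
  - subst. unfold Rminus; rewrite Rplus_opp_r, Rabs_R0; lra.
  - apply Hy. split; [split; [exact I| auto]|]. unfold R_dist; auto.
Qed.

Lemma dlim_recip x : x <> 0 -> derivable_pt_lim (fun y => / y) x (- / x ^ 2).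
Proof.
  intros Hx.
  assert (H := derivable_pt_lim_div (fct_cte 1) (fun y => y) x 0 1
     (derivable_pt_lim_const 1 x) (derivable_pt_lim_id x) Hx).
  replace (- / x ^ 2) with ((0 * (fun y => y) x - 1 * fct_cte 1 x) / ((fun y => y) x)²)
    by (unfold fct_cte, Rsqr; field; auto).
  apply (dlim_loc (fct_cte 1 / (fun y => y))%F _ _ _ 1); [lra| |exact H].
  intros y _; unfold div_fct, fct_cte; unfold Rdiv; ring.
Qed.

Definition HasD (h : P1 -> P1) (p : P1) (i j : bool) (l : R) : Prop :=
  in_dom i p /\ exists d, d > 0 /\
   (forall y, Rabs (y - chart i p) < d -> in_dom j (h (chart_inv i y))) /\
   derivable_pt_lim (fun y => chart j (h (chart_inv i y))) (chart i p) l.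

Lemma HasD_chain f g p i j k l1 l2 :
  HasD f p i j l1 -> HasD g (f p) j k l2 -> HasD (fun x => g (f x)) p i k (l2 * l1).
Proof.
  intros [Hi [d1 [Hd1 [Hn1 Hl1]]]] [Hj [d2 [Hd2 [Hn2 Hl2]]]].
  set (F := fun y => chart j (f (chart_inv i y))) in *.
  set (G := fun z => chart k (g (chart_inv j z))) in *.
  assert (HF0 : F (chart i p) = chart j (f p)).
  { unfold F; rewrite chart_inv_chart; auto. }
  destruct (dlim_cont _ _ _ Hl1 d2 Hd2) as [d3 [Hd3 Hc]].
  assert (Hm : 0 < Rmin d1 d3) by (apply Rmin_pos; lra).
  assert (Key : forall y, Rabs (y - chart i p) < Rmin d1 d3 ->
     chart k (g (f (chart_inv i y))) = G (F y) /\ in_dom k (g (f (chart_inv i y)))).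
  { intros y Hy.
    assert (H1 : Rabs (y - chart i p) < d1) by (eapply Rlt_le_trans; [exact Hy|apply Rmin_l]).
    assert (H3 : Rabs (y - chart i p) < d3) by (eapply Rlt_le_trans; [exact Hy|apply Rmin_r]).
    specialize (Hc y H3). rewrite HF0 in Hc.
    unfold G, F. rewrite chart_inv_chart by (apply Hn1; auto).
    split; auto. specialize (Hn2 (F y) Hc). unfold F in Hn2.
    rewrite chart_inv_chart in Hn2 by (apply Hn1; auto). auto. }
  split; auto. exists (Rmin d1 d3). split; [lra|]. split.
  - intros y Hy; apply Key; auto.
  - apply (dlim_loc (comp G F)) with (d := Rmin d1 d3); auto.
    + intros y Hy; unfold comp; symmetry; apply Key; auto.
    + apply derivable_pt_lim_comp; auto. rewrite HF0; auto.
Qed.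

Lemma HasD_trans a b q : in_dom a q -> in_dom b q -> exists t, HasD (fun x => x) q a b t.
Proof.
  intros Ha Hb. destruct a, b.
  - exists 1. split; auto. exists 1; split; [lra|]. split.
    + intros; apply in_dom_chart_inv.
    + apply (dlim_loc (fun y => y)) with 1; [lra| |apply derivable_pt_lim_id].
      intros; rewrite chart_chart_inv; auto.
  - destruct q as [x|]; [|simpl in Hb; congruence].
    assert (Hx : x <> 0) by (intro; subst; auto).
    exists (- / (/ x) ^ 2). split; auto. simpl chart.
    assert (Hx' : / x <> 0) by (apply Rinv_neq_0_compat; auto).
    assert (Hax : Rabs (/ x) > 0) by (apply Rabs_pos_lt; auto).
    exists (Rabs (/ x)); split; [lra|]. split.
    + intros y Hy; simpl. destruct (Req_EM_T y 0); [|discriminate].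
      subst. rewrite Rminus_0_l, Rabs_Ropp in Hy; lra.
    + apply (dlim_loc (fun y => / y)) with (Rabs (/ x)); auto.
      * intros y Hy; simpl. destruct (Req_EM_T y 0); auto.
        subst. rewrite Rminus_0_l, Rabs_Ropp in Hy; lra.
      * apply dlim_recip; auto.
  - destruct q as [x|]; [|simpl in Ha; congruence].
    assert (Hx : x <> 0) by (intro; subst; auto).
    exists (- / x ^ 2). split; auto. simpl chart.
    assert (Hax : Rabs x > 0) by (apply Rabs_pos_lt; auto).
    exists (Rabs x); split; [lra|]. split.
    + intros y Hy; simpl. intro E; inversion E as [E2]. rewrite E2 in Hy. rewrite Rminus_0_l, Rabs_Ropp in Hy; lra.

    + apply (dlim_loc (fun y => / y)) with (Rabs x); [lra| intros y Hy; reflexivity | apply dlim_recip; auto].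
  - exists 1. split; auto. exists 1; split; [lra|]. split.
    + intros; apply in_dom_chart_inv.
    + apply (dlim_loc (fun y => y)) with 1; [lra| |apply derivable_pt_lim_id].
      intros; rewrite chart_chart_inv; auto.
Qed.

Lemma HasD_ext h h' p i j l : (forall x, h x = h' x) -> HasD h p i j l -> HasD h' p i j l.
Proof.
  intros E [Hi [d [Hd [Hn Hl]]]]. split; auto. exists d; split; auto. split.
  - intros y Hy; rewrite <- E; auto.
  - apply (dlim_loc (fun y => chart j (h (chart_inv i y))) _ _ _ 1); [lra| |exact Hl]. intros; rewrite E; auto.
Qed.

Lemma HasD_unique h p i j l1 l2 : HasD h p i j l1 -> HasD h p i j l2 -> l1 = l2.
Proof.
  intros [_ [_ [_ [_ H1]]]] [_ [_ [_ [_ H2]]]]. eapply uniqueness_limite; eauto.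
Qed.

Lemma HasD_of_smooth h : smooth_P1 h -> forall p, exists i j l, HasD h p i j l.
Proof.
  intros Hs p. destruct (Hs p) as [i [j [Hi [d [Hd [Hn [gs [G0 GS]]]]]]]].
  exists i, j, (gs 1%nat (chart i p)). split; auto. exists d; split; auto. split; auto.
  apply (dlim_loc (gs 0%nat)) with d; auto.
  apply GS. unfold Rminus; rewrite Rplus_opp_r, Rabs_R0; lra.
Qed.

Lemma HasD_change h p i j l i' j' : HasD h p i j l -> in_dom i' p -> in_dom j' (h p) ->
  exists l', HasD h p i' j' l'.
Proof.
  intros H Hi' Hj'. pose proof H as [Hi _].
  destruct (HasD_trans i' i p Hi' Hi) as [t1 T1].
  assert (Hj : in_dom j (h p)).
  { destruct H as [_ [d [Hd [Hn _]]]]. specialize (Hn (chart i p)).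
    rewrite chart_inv_chart in Hn by auto. apply Hn.
    unfold Rminus; rewrite Rplus_opp_r, Rabs_R0; lra. }
  destruct (HasD_trans j j' (h p) Hj Hj') as [t2 T2].
  pose proof (HasD_chain _ _ _ _ _ _ _ _ T1 H) as C1.
  pose proof (HasD_chain _ _ _ _ _ _ _ _ C1 T2) as C2.
  eexists; exact C2.
Qed.

Lemma some_dom q : exists a, in_dom a q.
Proof. destruct q; [exists false|exists true]; simpl; discriminate. Qed.

Lemma diffeo_HasD f : diffeo_P1 f -> forall p i j, in_dom i p -> in_dom j (f p) ->
  exists l, l <> 0 /\ HasD f p i j l.
Proof.
  intros [g [gf [fg [sf sg]]]] p i j Hi Hj.
  destruct (HasD_of_smooth f sf p) as [i0 [j0 [l0 H0]]].
  destruct (HasD_change _ _ _ _ _ i j H0 Hi Hj) as [l H].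
  destruct (HasD_of_smooth g sg (f p)) as [i1 [j1 [m1 G1]]].
  destruct (HasD_change _ _ _ _ _ j i G1 Hj) as [m G]. { rewrite gf; auto. }
  pose proof (HasD_chain _ _ _ _ _ _ _ _ H G) as C.
  apply (HasD_ext _ (fun x => x)) in C; [|auto].
  destruct (HasD_trans i i p Hi Hi) as [t T].
  assert (Ht : t = 1).
  { destruct T as [_ [_ [_ [_ T]]]].
    eapply uniqueness_limite; [exact T|].
    apply (dlim_loc (fun y => y) _ _ _ 1); [lra| |apply derivable_pt_lim_id].
    intros; rewrite chart_chart_inv; auto. }
  subst t. pose proof (HasD_unique _ _ _ _ _ _ C T) as E.
  exists l; split; auto. intro; subst; lra.
Qed.

Lemma det_mmul M N : det2 (mmul M N) = det2 M * det2 N.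
Proof. destruct M, N; unfold det2, mmul; simpl; ring. Qed.

Lemma det_minv M : det2 M <> 0 -> det2 (minv M) = / det2 M.
Proof. destruct M; unfold minv, det2; simpl; intros; field; auto. Qed.

Definition I2 := Mat2 1 0 0 1.

Lemma mob_I2 x : mob I2 x = x.
Proof.
  destruct x as [y|]; simpl.
  - destruct (Req_EM_T (0 * y + 1) 0); [lra|]. f_equal; field.
  - destruct (Req_EM_T 0 0); [auto|lra].
Qed.

Lemma minv_l M : det2 M <> 0 -> mmul (minv M) M = I2.
Proof. destruct M; unfold minv, det2, mmul, I2; simpl; intros; f_equal; field; auto. Qed.

Lemma minv_r M : det2 M <> 0 -> mmul M (minv M) = I2.
Proof. destruct M; unfold minv, det2, mmul, I2; simpl; intros; f_equal; field; auto. Qed.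

Lemma mob_comp M N x : det2 N <> 0 -> mob (mmul M N) x = mob M (mob N x).
Proof.
  destruct M as [a b c d], N as [a' b' c' d']; unfold det2, mmul; simpl; intros HN.
  destruct x as [y|]; simpl.
  - destruct (Req_EM_T (c' * y + d') 0) as [E1|E1]; simpl.
    + assert (Ha : a' * y + b' <> 0).
      { intro. apply HN. assert (d' = - c' * y) by lra. assert (b' = - a' * y) by lra.
        subst; ring. }
      replace ((c * a' + d * c') * y + (c * b' + d * d')) with (c * (a' * y + b') + d * (c' * y + d')) by ring.
      rewrite E1, Rmult_0_r, Rplus_0_r.
      destruct (Req_EM_T (c * (a' * y + b')) 0) as [E2|E2];
      destruct (Req_EM_T c 0) as [E3|E3]; auto.
      * exfalso; apply Rmult_integral in E2; tauto.
      * subst; exfalso; apply E2; ring.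
      * f_equal. replace ((a * a' + b * c') * y + (a * b' + b * d')) with (a * (a' * y + b') + b * (c' * y + d')) by ring.
        rewrite E1. field. split; auto.
    + replace ((c * a' + d * c') * y + (c * b' + d * d')) with (c * (a' * y + b') + d * (c' * y + d')) by ring.
      destruct (Req_EM_T (c * (a' * y + b') + d * (c' * y + d')) 0) as [E2|E2];
      destruct (Req_EM_T (c * ((a' * y + b') / (c' * y + d')) + d) 0) as [E3|E3]; auto.
      * exfalso; apply E3. replace (c * ((a' * y + b') / (c' * y + d')) + d) with
          ((c * (a' * y + b') + d * (c' * y + d')) / (c' * y + d')) by (field; auto).
        rewrite E2; unfold Rdiv; ring.
      * exfalso; apply E2. replace (c * (a' * y + b') + d * (c' * y + d')) with
          ((c * ((a' * y + b') / (c' * y + d')) + d) * (c' * y + d')) by (field; auto).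
        rewrite E3; ring.
      * f_equal. field. split; auto.
  - destruct (Req_EM_T c' 0) as [E1|E1]; simpl.
    + subst c'. assert (Ha : a' <> 0) by (intro; subst; apply HN; ring).
      replace (c * a' + d * 0) with (c * a') by ring.
      destruct (Req_EM_T (c * a') 0) as [E2|E2]; destruct (Req_EM_T c 0) as [E3|E3]; auto.
      * exfalso; apply Rmult_integral in E2; tauto.
      * subst; exfalso; apply E2; ring.
      * f_equal; field; auto.
    + destruct (Req_EM_T (c * a' + d * c') 0) as [E2|E2];
      destruct (Req_EM_T (c * (a' / c') + d) 0) as [E3|E3]; auto.
      * exfalso; apply E3. replace (c * (a' / c') + d) with ((c * a' + d * c') / c') by (field; auto).
        rewrite E2; unfold Rdiv; ring.
      * exfalso; apply E2. replace (c * a' + d * c') with ((c * (a' / c') + d) * c') by (field; auto).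
        rewrite E3; ring.
      * f_equal. field. split; auto.
Qed.

Lemma mob_prop M N k x : k <> 0 -> ma N = k * ma M -> mb N = k * mb M ->
  mc N = k * mc M -> md N = k * md M -> mob N x = mob M x.
Proof.
  destruct M as [a b c d], N as [a' b' c' d']; simpl; intros Hk -> -> -> ->.
  destruct x as [y|]; simpl.
  - replace (k * c * y + k * d) with (k * (c * y + d)) by ring.
    destruct (Req_EM_T (k * (c * y + d)) 0) as [E|E]; destruct (Req_EM_T (c * y + d) 0) as [E'|E']; auto.
    + apply Rmult_integral in E; tauto.
    + rewrite E' in E; lra.
    + f_equal; field; split; auto.
  - destruct (Req_EM_T (k * c) 0) as [E|E]; destruct (Req_EM_T c 0) as [E'|E']; auto.
    + apply Rmult_integral in E; tauto.
    + rewrite E' in E; lra.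
    + f_equal; field; auto.
Qed.

Lemma Cinf_ext g h x0 d : (forall y, Rabs (y - x0) < d -> g y = h y) ->
  Cinf_on h x0 d -> Cinf_on g x0 d.
Proof.
  intros E [gs [G0 GS]]. exists gs; split; auto. intros; rewrite G0, E; auto.
Qed.

Fixpoint mcoef (al be ga de : R) (n : nat) : R :=
  match n with
  | O => al * de - be * ga
  | S m => - (INR (S (S m))) * ga * mcoef al be ga de m
  end.

Lemma dlim_pow_aff ga de k x : derivable_pt_lim (fun y => (ga * y + de) ^ k) x
  (INR k * (ga * x + de) ^ pred k * ga).
Proof.
  assert (H := derivable_pt_lim_comp (fun y => ga * y + de) (fun z => z ^ k) x ga _
     (dlim_affine ga de x) (derivable_pt_lim_pow (ga * x + de) k)).
  exact H.
Qed.

Lemma Cinf_moeb al be ga de x0 d :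
  (forall y, Rabs (y - x0) < d -> ga * y + de <> 0) ->
  Cinf_on (fun y => (al * y + be) / (ga * y + de)) x0 d.
Proof.
  intros Hnz.
  exists (fun n => match n with
                   | O => fun y => (al * y + be) / (ga * y + de)
                   | S m => fun y => mcoef al be ga de m / (ga * y + de) ^ (S (S m))
                   end).
  split; [auto|]. intros n x Hx. specialize (Hnz x Hx).
  destruct n as [|m].
  - assert (H := derivable_pt_lim_div (fun y => al * y + be) (fun y => ga * y + de) x al ga
       (dlim_affine al be x) (dlim_affine ga de x) Hnz).
    replace (mcoef al be ga de 0 / (ga * x + de) ^ 2) with
       ((al * (ga * x + de) - ga * (al * x + be)) / (ga * x + de)²)
      by (simpl; unfold Rsqr; field; auto).
    exact H.
  - assert (H := derivable_pt_lim_div (fct_cte (mcoef al be ga de m)) (fun y => (ga * y + de) ^ (S (S m))) x 0 _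
       (derivable_pt_lim_const _ x) (dlim_pow_aff ga de (S (S m)) x) (pow_nonzero _ _ Hnz)).
    replace (mcoef al be ga de (S m) / (ga * x + de) ^ S (S (S m))) with
      ((0 * (ga * x + de) ^ S (S m) - INR (S (S m)) * (ga * x + de) ^ pred (S (S m)) * ga * fct_cte (mcoef al be ga de m) x) /
        ((ga * x + de) ^ S (S m))²).
    + apply (dlim_loc (fct_cte (mcoef al be ga de m) / (fun y => (ga * y + de) ^ (S (S m))))%F _ _ _ 1);
        [lra| |exact H]. intros; reflexivity.
    + unfold fct_cte, Rsqr. simpl pred.
      assert (Hp : (ga * x + de) ^ m <> 0) by (apply pow_nonzero; auto).
      change (mcoef al be ga de (S m)) with (- INR (S (S m)) * ga * mcoef al be ga de m). simpl pow. field. auto.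
Qed.

Lemma nbhd_nz c d x0 : c * x0 + d <> 0 ->
  exists del, del > 0 /\ forall y, Rabs (y - x0) < del -> c * y + d <> 0.
Proof.
  intros H. assert (Ha : Rabs (c * x0 + d) > 0) by (apply Rabs_pos_lt; auto).
  assert (Hc := Rabs_pos c).
  exists (Rabs (c * x0 + d) / (Rabs c + 1)). split.
  - apply Rdiv_lt_0_compat; lra.
  - intros y Hy E. assert (E2 : c * x0 + d = c * (x0 - y)) by lra.
    rewrite E2, Rabs_mult in Ha, Hy. rewrite <- Rabs_Ropp in Hy.
    replace (- (y - x0)) with (x0 - y) in Hy by ring.
    assert (H1 := Rabs_pos (x0 - y)).
    apply (Rmult_lt_compat_r (Rabs c + 1)) in Hy; [|lra].
    unfold Rdiv in Hy. rewrite Rmult_assoc, Rinv_l, Rmult_1_r in Hy by lra.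
    nra.
Qed.

Lemma core_smooth M x0 : det2 M <> 0 -> exists j del, del > 0 /\
  (forall y, Rabs (y - x0) < del -> in_dom j (mob M (Some y))) /\
  Cinf_on (fun y => chart j (mob M (Some y))) x0 del.
Proof.
  destruct M as [a b c d]; unfold det2; simpl; intros HM.
  destruct (Req_EM_T (c * x0 + d) 0) as [E|E].
  - assert (Hab : a * x0 + b <> 0).
    { intro. apply HM. assert (d = - c * x0) by lra. assert (b = - a * x0) by lra. subst; ring. }
    destruct (nbhd_nz a b x0 Hab) as [del [Hd Hn]].
    exists true, del. split; auto. split.
    + intros y Hy. simpl. destruct (Req_EM_T (c * y + d) 0); [discriminate|].
      intro E2; inversion E2 as [E3]. apply (Hn y Hy).
      apply (f_equal (fun z => z * (c * y + d))) in E3. unfold Rdiv in E3.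
      rewrite Rmult_assoc, Rinv_l, Rmult_1_r, Rmult_0_l in E3; auto.
    + apply (Cinf_ext _ (fun y => (c * y + d) / (a * y + b))); [|apply Cinf_moeb; auto].
      intros y Hy. specialize (Hn y Hy). simpl. destruct (Req_EM_T (c * y + d) 0) as [E2|E2].
      * simpl. rewrite E2; unfold Rdiv; ring.
      * simpl. field. split; auto.
  - destruct (nbhd_nz c d x0 E) as [del [Hd Hn]].
    exists false, del. split; auto. split.
    + intros y Hy. simpl. destruct (Req_EM_T (c * y + d) 0); [exfalso; apply (Hn y Hy); auto|discriminate].
    + apply (Cinf_ext _ (fun y => (a * y + b) / (c * y + d))); [|apply Cinf_moeb; auto].
      intros y Hy. specialize (Hn y Hy). simpl. destruct (Req_EM_T (c * y + d) 0) as [E2|E2]; auto.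
      contradiction.
Qed.

Definition swapc (M : mat2) := Mat2 (mb M) (ma M) (md M) (mc M).

Lemma mob_swap M y : mob M (chart_inv true y) = mob (swapc M) (Some y).
Proof.
  destruct M as [a b c d]; simpl.
  destruct (Req_EM_T y 0) as [Ey|Ey].
  - subst. simpl. rewrite Rmult_0_r, Rplus_0_l.
    destruct (Req_EM_T c 0); auto. f_equal; field; auto.
  - simpl.
    destruct (Req_EM_T (c * / y + d) 0) as [E1|E1]; destruct (Req_EM_T (d * y + c) 0) as [E2|E2]; auto.
    + exfalso; apply E2. replace (d * y + c) with ((c * / y + d) * y) by (field; auto). rewrite E1; ring.
    + exfalso; apply E1. replace (c * / y + d) with ((d * y + c) / y) by (field; auto). rewrite E2; unfold Rdiv; ring.
    + f_equal. field. split; auto.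
Qed.

Lemma smooth_mob M : det2 M <> 0 -> smooth_P1 (mob M).
Proof.
  intros HM p. destruct p as [x0|].
  - destruct (core_smooth M x0 HM) as [j [del [Hd [Hn Hc]]]].
    exists false, j. split; [discriminate|]. exists del. split; auto.
  - assert (HM' : det2 (swapc M) <> 0) by (destruct M; unfold det2 in *; simpl in *; lra).
    destruct (core_smooth (swapc M) 0 HM') as [j [del [Hd [Hn Hc]]]].
    exists true, j. split; [discriminate|]. exists del. split; auto. simpl chart.
    split.
    + intros y Hy; rewrite mob_swap; auto.
    + apply (Cinf_ext _ (fun y => chart j (mob (swapc M) (Some y)))); [intros y _; rewrite <- mob_swap; reflexivity | exact Hc].
Qed.

Lemma diffeo_mob M : det2 M <> 0 -> diffeo_P1 (mob M).
Proof.
  intros HM. exists (mob (minv M)). split; [|split; [|split]].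
  - intros x. rewrite <- mob_comp by auto. rewrite minv_l by auto. apply mob_I2.
  - intros x. rewrite <- mob_comp by (rewrite det_minv by auto; apply Rinv_neq_0_compat; auto).
    rewrite minv_r by auto. apply mob_I2.
  - apply smooth_mob; auto.
  - apply smooth_mob. rewrite det_minv by auto; apply Rinv_neq_0_compat; auto.
Qed.

Lemma mob_diag_Some a b y : b <> 0 -> mob (diag2 a b) (Some y) = Some (a * y / b).
Proof.
  intros Hb. simpl. destruct (Req_EM_T (0 * y + b) 0); [lra|]. f_equal; field; auto.
Qed.

Lemma HasD_diag0 a b : a <> 0 -> b <> 0 -> HasD (mob (diag2 a b)) (Some 0) false false (a / b).
Proof.
  intros Ha Hb. split; [discriminate|]. exists 1; split; [lra|]. split.
  - intros y _. change (chart_inv false y) with (Some y). rewrite mob_diag_Some by auto. discriminate.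
  - apply (dlim_loc (fun y => (a / b) * y + 0) _ _ _ 1); [lra| |apply dlim_affine].
    intros y _. change (chart_inv false y) with (Some y). rewrite mob_diag_Some by auto. simpl. field; auto.
Qed.

Lemma HasD_diagInf a b : a <> 0 -> b <> 0 -> HasD (mob (diag2 a b)) None true true (b / a).
Proof.
  intros Ha Hb. split; [discriminate|]. exists 1; split; [lra|]. split.
  - intros y _. unfold chart_inv. destruct (Req_EM_T y 0) as [E|E].
    + simpl. destruct (Req_EM_T 0 0); [discriminate|lra].
    + rewrite mob_diag_Some by auto. intro E2; inversion E2 as [E3].
      apply (f_equal (fun z => z * b * y)) in E3.
      replace (a * / y / b * b * y) with a in E3 by (field; auto). lra.
  - apply (dlim_loc (fun y => (b / a) * y + 0) _ _ _ 1); [lra| |apply dlim_affine].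
    intros y _. unfold chart_inv. destruct (Req_EM_T y 0) as [E|E].
    + subst. simpl. destruct (Req_EM_T 0 0); [simpl; ring|lra].
    + rewrite mob_diag_Some by auto. simpl. field; auto.
Qed.

Lemma conj_compare (phi A B : P1 -> P1) p0 i k L la mu :
  L <> 0 -> HasD phi p0 i k L -> HasD A p0 i i la -> A p0 = p0 ->
  HasD B (phi p0) k k mu -> (forall x, phi (A x) = B (phi x)) -> la = mu.
Proof.
  intros HL Hphi HA HA0 HB E.
  assert (H1 : HasD phi (A p0) i k L) by (rewrite HA0; auto).
  pose proof (HasD_chain _ _ _ _ _ _ _ _ HA H1) as C1.
  pose proof (HasD_chain _ _ _ _ _ _ _ _ Hphi HB) as C2.
  apply (HasD_ext _ (fun x => B (phi x))) in C1; auto.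
  pose proof (HasD_unique _ _ _ _ _ _ C1 C2) as U.
  apply (Rmult_eq_reg_l L); auto. lra.
Qed.

Lemma det_conj S a b : det2 S <> 0 -> a <> 0 -> b <> 0 ->
  det2 (mmul S (mmul (diag2 a b) (minv S))) <> 0.
Proof.
  intros HS Ha Hb. rewrite !det_mmul, det_minv by auto. unfold det2 at 2; simpl.
  replace (a * b - 0 * 0) with (a * b) by ring.
  apply Rmult_integral_contrapositive_currified; [auto|].
  apply Rmult_integral_contrapositive_currified; [|apply Rinv_neq_0_compat; auto].
  apply Rmult_integral_contrapositive_currified; auto.
Qed.

Lemma conj_mat S D : det2 S <> 0 ->
  mmul (mmul S (mmul D (minv S))) S = mmul S D.
Proof.
  destruct S, D; unfold mmul, minv, det2; simpl; intros; f_equal; field; auto.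
Qed.

Lemma conj_mat2 T D : det2 T <> 0 ->
  mmul (minv T) (mmul T (mmul D (minv T))) = mmul D (minv T).
Proof.
  destruct T, D; unfold mmul, minv, det2; simpl; intros; f_equal; field; auto.
Qed.

Definition J2 := Mat2 0 1 1 0.

Lemma conj1 (S T : mat2) a b c d k : det2 S <> 0 -> det2 T <> 0 -> k <> 0 ->
  c = k * a -> d = k * b -> forall x,
  mob (mmul (mmul T (minv S)) (mmul S (mmul (diag2 a b) (minv S)))) x =
  mob (mmul (mmul T (mmul (diag2 c d) (minv T))) (mmul T (minv S))) x.
Proof.
  intros HS HT Hk -> -> x. symmetry. apply mob_prop with k; auto;
  destruct S, T; unfold mmul, minv, det2, diag2 in *; simpl in *; field; auto.
Qed.

Lemma conj2 (S T : mat2) a b c d k : det2 S <> 0 -> det2 T <> 0 -> k <> 0 ->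
  c = k * b -> d = k * a -> forall x,
  mob (mmul (mmul T (mmul J2 (minv S))) (mmul S (mmul (diag2 a b) (minv S)))) x =
  mob (mmul (mmul T (mmul (diag2 c d) (minv T))) (mmul T (mmul J2 (minv S)))) x.
Proof.
  intros HS HT Hk -> -> x. symmetry. apply mob_prop with k; auto;
  destruct S, T; unfold mmul, minv, det2, diag2, J2 in *; simpl in *; field; auto.
Qed.

Lemma minv_nz M : det2 M <> 0 -> det2 (minv M) <> 0.
Proof. intros; rewrite det_minv by auto; apply Rinv_neq_0_compat; auto. Qed.

Lemma mul_nz a b : a <> 0 -> b <> 0 -> a * b <> 0.
Proof. intros; apply Rmult_integral_contrapositive_currified; auto. Qed.

Lemma diag_nz a b : a <> 0 -> b <> 0 -> det2 (diag2 a b) <> 0.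
Proof. intros; unfold det2, diag2; simpl. replace (a * b - 0 * 0) with (a * b) by ring. apply mul_nz; auto. Qed.

Lemma mob_diag_id a x : a <> 0 -> mob (diag2 a a) x = x.
Proof.
  intros Ha. rewrite <- (mob_I2 x) at 2. apply mob_prop with a; auto; unfold I2, diag2; simpl; ring.
Qed.

Theorem theorem12p7 (I : Type) (S T : mat2) (p1 p2 q1 q2 : I -> R)
  (hS : det2 S <> 0) (hT : det2 T <> 0)
  (hp1 : forall r, p1 r <> 0) (hp2 : forall r, p2 r <> 0)
  (hq1 : forall r, q1 r <> 0) (hq2 : forall r, q2 r <> 0) :
  (exists f : P1 -> P1, diffeo_P1 f /\
     forall (r : I) (x : P1),
       f (mob (mmul S (mmul (diag2 (p1 r) (p2 r)) (minv S))) x)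
       = mob (mmul T (mmul (diag2 (q1 r) (q2 r)) (minv T))) (f x))
  <->
  (exists eps : Z, (eps = 1%Z \/ eps = (-1)%Z) /\
     forall r : I, q1 r / q2 r = powerRZ (p1 r / p2 r) eps).
Proof.
  split.
  - intros [f [Hf Hc]].
    pose proof Hf as [g [gf [fg _]]].
    set (phi := fun x => mob (minv T) (f (mob S x))).
    set (psi := fun z => mob (minv S) (g (mob T z))).
    assert (psiphi : forall x, psi (phi x) = x).
    { intros x; unfold psi, phi.
      rewrite <- mob_comp by (apply minv_nz; auto). rewrite minv_r by auto. rewrite mob_I2.
      rewrite gf. rewrite <- mob_comp by auto. rewrite minv_l by auto. apply mob_I2. }
    assert (phipsi : forall z, phi (psi z) = z).
    { intros z; unfold psi, phi.
      rewrite <- mob_comp by (apply minv_nz; auto). rewrite minv_r by auto. rewrite mob_I2.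
      rewrite fg. rewrite <- mob_comp by auto. rewrite minv_l by auto. apply mob_I2. }
    assert (Eqv : forall r x, phi (mob (diag2 (p1 r) (p2 r)) x) = mob (diag2 (q1 r) (q2 r)) (phi x)).
    { intros r x. unfold phi.
      rewrite <- mob_comp by (apply diag_nz; auto).
      rewrite <- conj_mat by auto.
      rewrite mob_comp by auto. rewrite Hc.
      rewrite <- mob_comp by (apply det_conj; auto).
      rewrite conj_mat2 by auto.
      rewrite mob_comp by (apply minv_nz; auto). reflexivity. }
    assert (Hphi : forall k, in_dom k (phi (Some 0)) -> exists L, L <> 0 /\ HasD phi (Some 0) false k L).
    { intros k Hk.
      destruct (some_dom (mob S (Some 0))) as [a Ha].
      destruct (some_dom (f (mob S (Some 0)))) as [b Hb].
      destruct (diffeo_HasD _ (diffeo_mob S hS) (Some 0) false a ltac:(discriminate) Ha) as [l1 [N1 D1]].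
      destruct (diffeo_HasD _ Hf _ a b Ha Hb) as [l2 [N2 D2]].
      destruct (diffeo_HasD _ (diffeo_mob _ (minv_nz T hT)) _ b k Hb Hk) as [l3 [N3 D3]].
      pose proof (HasD_chain _ _ _ _ _ _ _ _ D1 D2) as C1.
      pose proof (HasD_chain _ _ _ _ _ _ _ _ C1 D3) as C2.
      exists (l3 * (l2 * l1)). split; [apply mul_nz; auto; apply mul_nz; auto|exact C2]. }
    destruct (classic (exists r0, p1 r0 <> p2 r0)) as [[r0 Hr0]|Hall].
    + assert (Hq0 : q1 r0 <> q2 r0).
      { intro Eq. apply Hr0.
        assert (E1 : phi (mob (diag2 (p1 r0) (p2 r0)) (Some 1)) = phi (Some 1)).
        { rewrite Eqv. rewrite Eq. apply mob_diag_id; auto. }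
        apply (f_equal psi) in E1. rewrite !psiphi in E1.
        rewrite mob_diag_Some in E1 by auto. injection E1 as E2.
        apply (f_equal (fun z => z * p2 r0)) in E2.
        replace (p1 r0 * 1 / p2 r0 * p2 r0) with (p1 r0) in E2 by (field; auto). lra. }
      assert (Hw : mob (diag2 (q1 r0) (q2 r0)) (phi (Some 0)) = phi (Some 0)).
      { rewrite <- Eqv. rewrite mob_diag_Some by auto. f_equal. f_equal. unfold Rdiv; ring. }
      assert (Hfix : phi (Some 0) = Some 0 \/ phi (Some 0) = None).
      { remember (phi (Some 0)) as w0 eqn:Ew. destruct w0 as [w|]; [left|right; auto].
        rewrite mob_diag_Some in Hw by auto. injection Hw as Hw2.
        f_equal. apply (f_equal (fun z => z * q2 r0)) in Hw2.
        replace (q1 r0 * w / q2 r0 * q2 r0) with (q1 r0 * w) in Hw2 by (field; auto).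
        assert (Hm : (q1 r0 - q2 r0) * w = 0) by lra.
        apply Rmult_integral in Hm; destruct Hm as [Hm|Hm]; [exfalso; apply Hq0; lra | auto]. }
      destruct Hfix as [Hw0|Hw0].
      * exists 1%Z. split; [left; auto|]. intros r.
        destruct (Hphi false) as [L [HL HD]]; [rewrite Hw0; discriminate|].
        assert (E := conj_compare phi (mob (diag2 (p1 r) (p2 r))) (mob (diag2 (q1 r) (q2 r)))
          (Some 0) false false L _ _ HL HD (HasD_diag0 _ _ (hp1 r) (hp2 r))
          ltac:(rewrite mob_diag_Some by auto; f_equal; unfold Rdiv; ring)
          ltac:(rewrite Hw0; apply HasD_diag0; auto) (Eqv r)).
        rewrite <- E. simpl. ring.
      * exists (-1)%Z. split; [right; auto|]. intros r.
        destruct (Hphi true) as [L [HL HD]]; [rewrite Hw0; discriminate|].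
        assert (E := conj_compare phi (mob (diag2 (p1 r) (p2 r))) (mob (diag2 (q1 r) (q2 r)))
          (Some 0) false true L _ _ HL HD (HasD_diag0 _ _ (hp1 r) (hp2 r))
          ltac:(rewrite mob_diag_Some by auto; f_equal; unfold Rdiv; ring)
          ltac:(rewrite Hw0; apply HasD_diagInf; auto) (Eqv r)).
        simpl. rewrite E. field. repeat split; auto.
    + exists 1%Z; split; [left; auto|]. intros r.
      assert (Hp : p1 r = p2 r) by (apply NNPP; intro; apply Hall; exists r; auto).
      assert (E1 := Eqv r (psi (Some 1))).
      rewrite Hp, mob_diag_id, phipsi in E1 by auto.
      rewrite mob_diag_Some in E1 by auto. injection E1 as E2.
      simpl. rewrite Hp. replace (q1 r / q2 r) with (q1 r * 1 / q2 r) by (field; auto). rewrite <- E2. field; auto.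
  - intros [eps [[-> | ->] H]].
    + exists (mob (mmul T (minv S))). split.
      * apply diffeo_mob. rewrite det_mmul; apply mul_nz; [auto|apply minv_nz; auto].
      * intros r x. rewrite <- mob_comp by (apply det_conj; auto).
        rewrite <- mob_comp by (rewrite det_mmul; apply mul_nz; [auto|apply minv_nz; auto]).
        apply conj1 with (k := q2 r / p2 r); auto.
        -- unfold Rdiv; apply mul_nz; [auto|apply Rinv_neq_0_compat; auto].
        -- transitivity (q1 r / q2 r * q2 r); [field; auto|]. rewrite H. simpl. field; auto.
        -- field; auto.
    + assert (HJ : det2 (mmul T (mmul J2 (minv S))) <> 0).
      { rewrite !det_mmul; apply mul_nz; [auto|apply mul_nz; [|apply minv_nz; auto]].
        unfold det2, J2; simpl; lra. }
      exists (mob (mmul T (mmul J2 (minv S)))). split.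
      * apply diffeo_mob; auto.
      * intros r x. rewrite <- mob_comp by (apply det_conj; auto).
        rewrite <- mob_comp by auto.
        apply conj2 with (k := q2 r / p1 r); auto.
        -- unfold Rdiv; apply mul_nz; [auto|apply Rinv_neq_0_compat; auto].
        -- transitivity (q1 r / q2 r * q2 r); [field; auto|]. rewrite H. simpl. field; auto.
        -- field; auto.
Qed.
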